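(* For all positive integers $\Delta$ and positive reals $\nu$ there is $c$ such that if $p\ge c(\log n/n)^{1/\Delta}$, the following holds a.a.s. for $\Gamma=G(n,p)$ on vertex set $V$. Let $X$ be any subset of $V$ and $\mathcal{F}$ any family of pairwise disjoint $\Delta$-sets in $V\setminus X$. If $\nu n\le|X|\le|\mathcal{F}|\le n$, then $\mathrm{stars}_\Gamma(X,\mathcal{F})\le 7p^\Delta|X||\mathcal{F}|$.
   Context: $G(n,p)$ is the random graph on $[n]$ with edges present independently with probability $p$; a.a.s. means with probability tending to $1$ as $n\to\infty$ (simultaneously for all such $X,\mathcal{F}$). For a graph $G$, a vertex set $X$ and a family $\mathcal{F}$ of pairwise disjoint $\ell$-sets outside $X$, $\mathrm{stars}_G(X,\mathcal{F})$ is the number of pairs $(x,F)$ with $x\in X$, $F\in\mathcal{F}$ and $F\subseteq N_G(x)$. *)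

(* Defs.v *)
From HB Require Import structures.
From mathcomp Require Import all_boot all_order all_algebra.
From mathcomp Require Import all_classical all_reals all_analysis.
Set Implicit Arguments. Unset Strict Implicit. Unset Printing Implicit Defensive.
Import Order.TTheory GRing.Theory Num.Theory.
Local Open Scope ring_scope.

(* A simple graph on [n] = 'I_n is a set of 2-element vertex sets (its edges). *)
Definition pairs (n : nat) : {set {set 'I_n}} := [set e : {set 'I_n} | #|e| == 2%N].

Definition gnp_prob {R : realType} (n : nat) (p : R) (P : pred {set {set 'I_n}}) : R :=
  \sum_(E : {set {set 'I_n}} | (E \subset pairs n) && P E)
     p ^+ #|E| * (1 - p) ^+ (#|pairs n| - #|E|).

Definition nbhd (n : nat) (E : {set {set 'I_n}}) (x : 'I_n) : {set 'I_n} :=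
  [set y | [set x; y] \in E].

Definition stars (n : nat) (E : {set {set 'I_n}}) (X : {set 'I_n})
    (F : {set {set 'I_n}}) : nat :=
  #|[set xf : 'I_n * {set 'I_n} | [&& xf.1 \in X, xf.2 \in F & xf.2 \subset nbhd E xf.1]]|.

Definition stars_event {R : realType} (Delta : nat) (nu p : R) (n : nat)
    (E : {set {set 'I_n}}) : bool :=
  [forall X : {set 'I_n}, forall F : {set {set 'I_n}},
    ([forall f in F, #|f| == Delta]
     && [forall f in F, [disjoint f & X]]
     && [forall f in F, forall g in F, (f != g) ==> [disjoint f & g]]
     && (nu * n%:R <= #|X|%:R) && (#|X| <= #|F|)%N && (#|F| <= n)%N)
    ==> ((stars E X F)%:R <= 7 * p ^+ Delta * #|X|%:R * #|F|%:R)].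

(* Main.v *)
Require Import Defs.
From HB Require Import structures.
From mathcomp Require Import all_boot all_order all_algebra.
From mathcomp Require Import all_classical all_reals all_analysis.
From mathcomp Require Import ring lra zify.
Import Order.TTheory GRing.Theory Num.Theory.
Local Open Scope ring_scope.

Section Prob.
Variable R : realType.
Variable n : nat.
Variable p : R.
Hypothesis p0 : 0 <= p.
Hypothesis p1 : p <= 1.

Definition wt (E : {set {set 'I_n}}) : R :=
  p ^+ #|E| * (1 - p) ^+ (#|pairs n| - #|E|).

Lemma wt_ge0 E : 0 <= wt E.
Proof. by rewrite /wt mulr_ge0 // exprn_ge0 // subr_ge0. Qed.

Lemma gnpE (P : pred {set {set 'I_n}}) :
  @gnp_prob R n p P = \sum_(E : {set {set 'I_n}} | E \subset pairs n) wt E * (P E)%:R.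
Proof.
rewrite /gnp_prob big_mkcondr /=; apply: eq_bigr => E _.
by case: (P E); rewrite ?mulr1 ?mulr0.
Qed.

Lemma prob_sub (A : {set {set 'I_n}}) : A \subset pairs n ->
  @gnp_prob R n p (fun E => A \subset E) = p ^+ #|A|.
Proof.
move=> sAP.
pose h (i : {set 'I_n}) (b : bool) : R := if b then (if i \in pairs n then p else 0)
  else (if i \in A then 0 else if i \in pairs n then 1 - p else 1).
have H1 : \prod_i (h i true + h i false) = p ^+ #|A|.
  rewrite -prodr_const (big_mkcond (fun i => i \in A)) /=.
  apply: eq_bigr => i _; rewrite /h.
  case: (boolP (i \in A)) => iA; first by rewrite (fintype.subsetP sAP _ iA) addr0.
  by case: (i \in pairs n); rewrite ?add0r // addrC subrK.
rewrite -H1 bigA_distr /gnp_prob big_mkcond /=.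
apply: eq_bigr => J _.
case: ifP => [/andP[sJP sAJ]|].
  rewrite (bigID (fun i => i \in J)) /=.
  rewrite (eq_bigr (fun _ => p)); last first.
    by move=> i iJ; rewrite iJ /h (fintype.subsetP sJP _ iJ).
  rewrite prodr_const.
  rewrite (eq_bigr (fun i => if i \in pairs n :\: J then 1 - p else 1)); last first.
    move=> i iJ; rewrite (negbTE iJ) /h finset.in_setD iJ /=.
    by case: ifP => // iA; rewrite (fintype.subsetP sAJ _ iA) in iJ.
  rewrite -big_mkcondr /=.
  rewrite (eq_bigl (fun i => i \in pairs n :\: J)); last first.
    by move=> i; rewrite finset.in_setD; case: (i \in J).
  rewrite prodr_const cardsD (finset.setIidPr sJP) /wt. done.
move/negbT; rewrite negb_and => /orP[/fintype.subsetPn[i iJ niP]|/fintype.subsetPn[i iA niJ]].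
  by rewrite (bigD1 i) //= iJ /h (negbTE niP) mul0r.
by rewrite (bigD1 i) //= (negbTE niJ) /h iA mul0r.
Qed.

Lemma prob_T : @gnp_prob R n p predT = 1.
Proof.
rewrite -(expr0 p) -(cards0 ({set 'I_n})) -prob_sub ?finset.sub0set //.
by apply: eq_bigl => E; rewrite finset.sub0set.
Qed.

Lemma prob_le (P Q : pred {set {set 'I_n}}) : (forall E, P E -> Q E) ->
  @gnp_prob R n p P <= @gnp_prob R n p Q.
Proof.
move=> PQ; rewrite !gnpE; apply: ler_sum => E _; apply: ler_wpM2l; first exact: wt_ge0.
by case: (boolP (P E)) => [/PQ -> //|_]; rewrite ler_nat.
Qed.

Lemma prob_compl (P : pred {set {set 'I_n}}) :
  @gnp_prob R n p P = 1 - @gnp_prob R n p (predC P).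
Proof.
apply/eqP; rewrite eq_sym subr_eq -prob_T !gnpE -big_split /=; apply/eqP.
by apply: eq_bigr => E _; case: (P E); rewrite /= ?mulr0 ?mulr1 ?addr0 ?add0r.
Qed.

Lemma prob_union (I : finType) (Pi : pred I) (Q : I -> pred {set {set 'I_n}}) :
  @gnp_prob R n p (fun E => [exists i, Pi i && Q i E]) <=
  \sum_(i | Pi i) @gnp_prob R n p (Q i).
Proof.
rewrite gnpE (eq_bigr (fun i => \sum_(E : {set {set 'I_n}} | E \subset pairs n) wt E * (Q i E)%:R));
  last by move=> i _; rewrite gnpE.
rewrite exchange_big /=; apply: ler_sum => E _; rewrite -mulr_sumr.
apply: ler_wpM2l; first exact: wt_ge0.
case: existsP => [[i /andP[Pi_ Qi]]|_]; last by apply: sumr_ge0 => i _; rewrite ler0n.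
by rewrite (bigD1 i) //= Qi lerDl sumr_ge0 // => j _; rewrite ler0n.
Qed.

End Prob.

Lemma ffact_leq_exp (N k : nat) : (N ^_ k <= N ^ k)%N.
Proof.
elim: k N => [|k IH] N; first by rewrite ffactn0 expn0.
rewrite ffactnS expnS leq_mul2l; case: N => //= N; apply: leq_trans (IH N) _.
by case: k {IH} => [|k]; rewrite ?expn0 // leq_exp2r.
Qed.

Lemma bin_leq_exp (N k : nat) : ('C(N, k) <= N ^ k)%N.
Proof.
apply: leq_trans (ffact_leq_exp N k); rewrite -bin_ffact leq_pmulr //.
exact: fact_gt0.
Qed.

Section An.
Variable R : realType.

Lemma expR14 : expR (4^-1 : R) <= 4 / 3.
Proof.
have h := expR_ge1Dx (- 4^-1 : R).
have e := expR_gt0 (4^-1 : R).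
rewrite expRN in h.
have yz : expR (4^-1 : R) * (expR 4^-1)^-1 = 1 by rewrite divff ?gt_eqF.
move: h e yz; set y := expR _; set z := y^-1 => h e yz.
have hz : 0 <= 4 * z - 3.
  lra.
have : 0 <= y * (4 * z - 3) by apply: mulr_ge0 => //; exact: ltW.
rewrite mulrBr mulrCA yz mulr1 => ?; lra.
Qed.

Lemma expR1_7 : expR (1 : R) / 7 <= expR (- 4^-1).
Proof.
have e := expR_gt0 (4^-1 : R).
have h : expR (1 : R) = expR (4^-1) ^+ 4 by rewrite -expRM_natl; congr expR; lra.
have h1 : expR (4^-1 : R) ^+ 5 <= (4/3) ^+ 5 by apply: lerXn2r; [by rewrite nnegrE expR_ge0|rewrite nnegrE; lra|exact: expR14].
have yz : expR (4^-1 : R) * (expR 4^-1)^-1 = 1 by rewrite divff ?gt_eqF.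
rewrite h expRN; move: h1 e yz; set y := expR _; set z := y^-1 => h1 e yz.
have h5 : y ^+ 5 <= 7 by apply: le_trans h1 _; lra.
have : y ^+ 4 / 7 = y ^+ 5 / 7 * z by rewrite /z exprSr; field; rewrite gt_eqF.
move=> ->; rewrite -[X in _ <= X]mul1r; apply: ler_wpM2r.
  by rewrite /z invr_ge0 ltW.
by rewrite ler_pdivrMr // mul1r.
Qed.

Lemma key_bound (N k : nat) (q : R) : 0 <= q -> (0 < k)%N ->
  7 * (N%:R * q) <= k%:R ->
  ('C(N, k))%:R * q ^+ k <= expR (- (k%:R / 4)).
Proof.
move=> q0 k0 hk.
have kf : 0 < (k`!)%:R :> R by rewrite ltr0n fact_gt0.
have kr : 0 < k%:R :> R by rewrite ltr0n.
have h1 : ('C(N, k))%:R * (k`!)%:R <= (N%:R : R) ^+ k.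
  by rewrite -natrM bin_ffact -natrX ler_nat ffact_leq_exp.
have h2 : (k%:R : R) ^+ k / (k`!)%:R <= expR k%:R.
  case: k k0 kf kr hk h1 => // k _ kf kr hk h1.
  have := expR_ge1Dxn k (ltW kr); lra.
have h3 : (N%:R * q) ^+ k <= (k%:R / 7) ^+ k.
  apply: lerXn2r; rewrite ?nnegrE ?mulr_ge0 ?divr_ge0 ?ler0n //; lra.
have h4 : expR (k%:R : R) = expR 1 ^+ k by rewrite -expRM_natl mulr1.
have h5 : (expR (1 : R) / 7) ^+ k <= expR (- 4^-1) ^+ k.
  by apply: lerXn2r; rewrite ?nnegrE ?divr_ge0 ?expR_ge0 //; exact: expR1_7.
have h6 : expR (- (k%:R / 4)) = expR (- 4^-1 : R) ^+ k by rewrite -expRM_natl; congr expR; lra.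
rewrite h6; apply: le_trans h5.
rewrite expr_div_n -h4.
have -> : ('C(N, k))%:R * q ^+ k = ('C(N, k))%:R * (k`!)%:R * q ^+ k / (k`!)%:R.
  by field; rewrite gt_eqF.
apply: le_trans (_ : (N%:R * q) ^+ k / (k`!)%:R <= _).
  rewrite ler_pM2r ?invr_gt0 // exprMn ler_wpM2r // exprn_ge0 //.
apply: le_trans (_ : (k%:R / 7) ^+ k / (k`!)%:R <= _).
  by rewrite ler_pM2r ?invr_gt0.
rewrite expr_div_n.
have -> : (k%:R : R) ^+ k / 7 ^+ k / (k`!)%:R = ((k%:R) ^+ k / (k`!)%:R) / 7 ^+ k.
  by rewrite mulrAC.
by apply: ler_wpM2r => //; rewrite invr_ge0 exprn_ge0.
Qed.
End An.

Section Comb.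
Variable R : realType.
Variables (Delta : nat) (nu : R) (n : nat).

Definition valid (X : {set 'I_n}) (F : {set {set 'I_n}}) : bool :=
     [forall f in F, #|f| == Delta]
     && [forall f in F, [disjoint f & X]]
     && [forall f in F, forall g in F, (f != g) ==> [disjoint f & g]]
     && (nu * n%:R <= #|X|%:R) && (#|X| <= #|F|)%N && (#|F| <= n)%N.

Definition starset (E : {set {set 'I_n}}) (X : {set 'I_n}) (F : {set {set 'I_n}}) : {set 'I_n * {set 'I_n}} :=
  [set xf : 'I_n * {set 'I_n} | [&& xf.1 \in X, xf.2 \in F & xf.2 \subset nbhd E xf.1]].

Definition dom (K : {set 'I_n * {set 'I_n}}) : {set ('I_n * {set 'I_n}) * 'I_n} :=
  [set z | (z.1 \in K) && (z.2 \in z.1.2)].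

Definition edgesK (K : {set 'I_n * {set 'I_n}}) : {set {set 'I_n}} :=
  (fun z : ('I_n * {set 'I_n}) * 'I_n => [set z.1.1; z.2]) @: dom K.

Lemma edges_sub E X F (K : {set 'I_n * {set 'I_n}}) : K \subset starset E X F -> edgesK K \subset E.
Proof.
move=> sK; apply/fintype.subsetP => e /imsetP[z]; rewrite inE => /andP[zK zf] ->.
move: (fintype.subsetP sK _ zK); rewrite inE => /and3P[_ _ /fintype.subsetP sN].
by move: (sN _ zf); rewrite inE.
Qed.

Section V.
Variables (X : {set 'I_n}) (F : {set {set 'I_n}}).
Hypothesis vXF : valid X F.
Variable K : {set 'I_n * {set 'I_n}}.
Hypothesis sK : K \subset finset.setX X F.

Lemma vcard {f} : f \in F -> #|f| = Delta.
Proof. by move: vXF => /andP[/andP[/andP[/andP[/andP[/forall_inP h _] _] _] _] _] /h /eqP. Qed.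
Lemma vdisj {f} : f \in F -> [disjoint f & X].
Proof. by move: vXF => /andP[/andP[/andP[/andP[/andP[_ /forall_inP h] _] _] _] _] /h. Qed.
Lemma vpair {f g} : f \in F -> g \in F -> f != g -> [disjoint f & g].
Proof.
move: vXF => /andP[/andP[/andP[/andP[/andP[_ _] /forall_inP h] _] _] _] fF gF.
by move: (h f fF) => /forall_inP /(_ g gF) /implyP.
Qed.

Lemma domP z : z \in dom K -> [/\ z.1.1 \in X, z.1.2 \in F, z.2 \in z.1.2 & z.2 \notin X].
Proof.
rewrite inE => /andP[zK zf]; move: (fintype.subsetP sK _ zK); rewrite inE => /andP[zX zF].
split => //; apply: contraTN zf => zX'.
by move: (vdisj zF); rewrite disjoint_sym => /disjointFr ->.
Qed.

Lemma edges_pairs : edgesK K \subset pairs n.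
Proof.
apply/fintype.subsetP => e /imsetP[z /domP[zX _ _ zn] ->].
rewrite inE cards2; have -> // : (z.1.1 != z.2) by apply: contraNneq zn => <-.
Qed.

Lemma edges_card : #|edgesK K| = (Delta * #|K|)%N.
Proof.
rewrite card_in_imset; last first.
  move=> [[x f] y] [[x' f'] y'] /domP[/= xX fF yf yX] /domP[/= xX' fF' yf' yX'] h.
  have ex : x = x'.
    have : x \in [set x'; y'] by rewrite -h set21.
    rewrite !inE => /orP[/eqP //|/eqP e]; by rewrite -e xX in yX'.
  have ey : y = y'.
    have : y \in [set x'; y'] by rewrite -h !inE eqxx orbT.
    rewrite !inE => /orP[/eqP e|/eqP //]; by rewrite e xX' in yX.
  subst x' y'; have ef : f = f'.
    apply/eqP; apply: contraTT isT => ne.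
    by move: (vpair fF fF' ne) => /disjointFr /(_ yf); rewrite yf'.
  by subst f'.
rewrite -sum1_card /dom.
rewrite (eq_bigl (fun z => (z.1 \in K) && (z.2 \in z.1.2))); last by move=> z; rewrite inE.
rewrite -(pair_big_dep (fun a => a \in K) (fun a y => y \in a.2) (fun _ _ => 1%N)) /=.
rewrite (eq_bigr (fun _ => Delta)); first by rewrite sum_nat_const mulnC.
move=> a aK; rewrite sum1_card; apply: vcard.
by move: (fintype.subsetP sK _ aK); rewrite inE => /andP[].
Qed.
End V.
End Comb.

Lemma leq_expn (m k e : nat) : (m <= k)%N -> (m ^ e <= k ^ e)%N.
Proof. by move=> mk; elim: e => // e IH; rewrite !expnS leq_mul. Qed.

Section Count.
Variable R : realType.
Variables (Delta : nat) (n : nat) (nu : R).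

Definition Rp : pred (option {set 'I_n}) :=
  fun o => if o is Some f then #|f| == Delta else true.

Definition phi (g : {ffun 'I_n -> option {set 'I_n}}) : {set {set 'I_n}} :=
  [set f : {set 'I_n} | [exists i, g i == Some f]].

Lemma card_Rp : (#|Rp| <= 'C(n, Delta).+1)%N.
Proof.
apply: leq_trans (_ : #|None |: (Some @: [set f : {set 'I_n} | #|f| == Delta])| <= _)%N.
  apply: subset_leq_card; apply/fintype.subsetP => -[f|] hf; rewrite !inE //.
  by apply/orP; right; apply: imset_f; rewrite inE.
rewrite cardsU1 card_imset; last exact: Some_inj.
by rewrite card_draws card_ord; case: (None \in _).
Qed.

Lemma count_valid :
  (#|[set a : {set 'I_n} * {set {set 'I_n}} | @valid R Delta nu n a.1 a.2]|
     <= (2 * 'C(n, Delta).+1) ^ n)%N.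
Proof.
pose S := [set phi g | g in ffun_on Rp].
apply: leq_trans (_ : #|finset.setX (powerset [set: 'I_n]) S| <= _)%N.
  apply: subset_leq_card; apply/fintype.subsetP => -[X F]; rewrite !inE /= => v.
  rewrite finset.subsetT /=.
  have Fn : (#|F| <= n)%N by move: v => /andP[_ ->].
  pose g := [ffun i : 'I_n => if (i < #|F|)%N then Some (nth (finset.set0) (enum F) i) else None].
  apply/imsetP; exists g.
    apply/ffun_onP => i; rewrite ffunE; case: ifP => // iF.
    rewrite /Rp /=; apply/eqP; apply: (@vcard R Delta nu n X F v).
    by rewrite -mem_enum mem_nth // -cardE.
  apply/setP => f; rewrite inE; apply/idP/existsP => [fF|[i]].
    have ifn : (index f (enum F) < n)%N.
      by apply: leq_trans Fn; rewrite cardE index_mem mem_enum.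
    exists (Ordinal ifn); rewrite ffunE /= cardE index_mem mem_enum fF.
    by rewrite nth_index ?mem_enum.
  rewrite ffunE; case: ifP => // iF /eqP [<-].
  by rewrite -mem_enum mem_nth // -cardE.
rewrite cardsX card_powerset cardsT card_ord expnMn leq_mul2l.
apply/orP; right; apply: leq_trans (leq_imset_card _ _) _.
rewrite card_ffun_on card_ord; apply: leq_expn; exact: card_Rp.
Qed.
End Count.

Section Main.
Variables (R : realType) (Delta : nat) (nu : R) (n : nat) (p : R).
Hypotheses (p0 : 0 <= p) (p1 : p <= 1).

Definition kk (X : {set 'I_n}) (F : {set {set 'I_n}}) : nat :=
  (Num.truncn (7 * p ^+ Delta * #|X|%:R * #|F|%:R)).+1.
Definition Pv (a : {set 'I_n} * {set {set 'I_n}}) := @valid R Delta nu n a.1 a.2.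
Definition Qv (a : {set 'I_n} * {set {set 'I_n}}) (K : {set 'I_n * {set 'I_n}}) :=
  (K \subset finset.setX a.1 a.2) && (#|K| == kk a.1 a.2).

Lemma bad_sub E : ~~ @stars_event R Delta nu p n E ->
  [exists i : ({set 'I_n} * {set {set 'I_n}}) * {set 'I_n * {set 'I_n}},
     (Pv i.1 && Qv i.1 i.2) && (edgesK n i.2 \subset E)].
Proof.
rewrite /stars_event negb_forall => /existsP[X]; rewrite negb_forall => /existsP[F].
rewrite negb_imply => /andP[v hb].
have v' : @valid R Delta nu n X F by exact: v.
have hlt : 7 * p ^+ Delta * #|X|%:R * #|F|%:R < (#|starset n E X F|)%:R.
  by rewrite ltNge.
have x0 : 0 <= 7 * p ^+ Delta * #|X|%:R * #|F|%:R.
  by rewrite !mulr_ge0 ?ler0n ?exprn_ge0.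
have : (kk X F <= #|starset n E X F|)%N by rewrite /kk Num.Theory.truncn_lt_nat.
case/card_geqP => s [us ss subs].
apply/existsP; exists ((X, F), [set x in s]); rewrite /Pv /Qv /= v' /=.
have sK : [set x in s] \subset starset n E X F.
  by apply/fintype.subsetP => x; rewrite inE => /subs.
rewrite cardsE (card_uniqP us) ss eqxx andbT (@edges_sub n E X F _ sK) andbT.
apply/fintype.subsetP => x xs; move: (fintype.subsetP sK _ xs); rewrite !inE => /and3P[-> -> _]; done.
Qed.

Lemma prob_bad : gnp_prob p (predC (@stars_event R Delta nu p n)) <=
  \sum_(a | Pv a) ('C(#|a.1| * #|a.2|, kk a.1 a.2))%:R * (p ^+ Delta) ^+ kk a.1 a.2.
Proof.
apply: le_trans (@prob_le R n p p0 p1 _ (fun E => [exists i : ({set 'I_n} * {set {set 'I_n}}) * {set 'I_n * {set 'I_n}},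
     (Pv i.1 && Qv i.1 i.2) && (edgesK n i.2 \subset E)]) _) _.
  by move=> E; exact: bad_sub.
apply: le_trans (@prob_union R n p p0 p1 _ (fun i => Pv i.1 && Qv i.1 i.2) (fun i E => edgesK n i.2 \subset E)) _.
rewrite -(pair_big_dep Pv Qv (fun a K => gnp_prob p (fun E => edgesK n K \subset E))) /=.
apply: ler_sum => a va.
rewrite (eq_bigr (fun _ => (p ^+ Delta) ^+ kk a.1 a.2)); last first.
  move=> K /andP[sK /eqP cK].
  by rewrite (@prob_sub R n p) ?(@edges_pairs R Delta nu n _ _ va _ sK) // (@edges_card R Delta nu n _ _ va _ sK) cK exprM.
rewrite (eq_bigl (fun K => K \in [set K | Qv a K])); last by move=> K; rewrite inE.
by rewrite sumr_const /Qv cards_draws cardsX mulr_natl.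
Qed.

Lemma term_bound (a : {set 'I_n} * {set {set 'I_n}}) : (0 < n)%N -> 0 <= nu -> Pv a ->
  4 * ((Delta + 3) * n)%N%:R * ln n%:R <= 7 * p ^+ Delta * nu ^+ 2 * n%:R ^+ 2 ->
  ('C(#|a.1| * #|a.2|, kk a.1 a.2))%:R * (p ^+ Delta) ^+ kk a.1 a.2
    <= (n%:R ^+ ((Delta + 3) * n)%N)^-1.
Proof.
move=> n0 nu0 va hm.
have q0 : 0 <= p ^+ Delta by rewrite exprn_ge0.
set x := 7 * p ^+ Delta * #|a.1|%:R * #|a.2|%:R.
have x0 : 0 <= x by rewrite /x !mulr_ge0 ?ler0n.
have hx : x < (kk a.1 a.2)%:R by rewrite /kk; case/andP: (Num.Theory.truncn_itv x0).
have hk : 7 * ((#|a.1| * #|a.2|)%:R * p ^+ Delta) <= (kk a.1 a.2)%:R.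
  have -> : 7 * ((#|a.1| * #|a.2|)%:R * p ^+ Delta) = x by rewrite /x natrM; ring.
  exact: ltW.
apply: le_trans (@key_bound R _ _ _ q0 (ltn0Sn _) hk) _.
move: va; rewrite /Pv /valid => /andP[/andP[/andP[_ h1] h2] _].
have hX : nu * n%:R <= #|a.1|%:R := h1.
have hF : (#|a.1|%:R : R) <= #|a.2|%:R by rewrite ler_nat.
have hn : 0 <= nu * n%:R by rewrite mulr_ge0 ?ler0n.
have h3 : nu ^+ 2 * n%:R ^+ 2 <= #|a.1|%:R * #|a.2|%:R.
  have -> : nu ^+ 2 * n%:R ^+ 2 = (nu * n%:R) * (nu * n%:R) by ring.
  by apply: ler_pM => //; apply: le_trans hF.
have h4 : 7 * p ^+ Delta * nu ^+ 2 * n%:R ^+ 2 <= x.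
  by rewrite /x -!mulrA ler_wpM2l // ler_wpM2l // mulrA -expr2.
have hE : (n%:R : R) ^+ ((Delta + 3) * n)%N = expR (((Delta + 3) * n)%N%:R * ln n%:R).
  by rewrite expRM_natl lnK // posrE ltr0n.
rewrite hE.
rewrite -expRN ler_expR lerN2.
have : (4 : R) * ((Delta + 3) * n)%N%:R * ln n%:R <= (kk a.1 a.2)%:R.
  exact: (le_trans (le_trans hm h4) (ltW hx)).
set m := ((Delta + 3) * n)%N%:R; set kr := (kk a.1 a.2)%:R => h; lra.
Qed.

End Main.

Lemma cnt_nat (n D C : nat) : (2 <= n)%N -> (C <= n ^ D)%N -> (2 * C.+1 <= n ^ (D + 2))%N.
Proof.
move=> n2 hC; rewrite expnD.
have t1 : (0 < n ^ D)%N by rewrite expn_gt0; lia.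
set t := (n ^ D)%N in hC t1 *.
rewrite expnS expn1.
have h4 : (4 <= n * n)%N by apply: (leq_mul n2 n2).
have := leq_mul (leqnn t) h4. lia.
Qed.

Theorem lemma6p2 (R : realType) (Delta : nat) (nu : R) :
  (0 < Delta)%N -> 0 < nu ->
  exists c : R, forall eps : R, 0 < eps ->
    exists N : nat, forall n : nat, (N <= n)%N ->
      forall p : R, 0 <= p -> p <= 1 ->
        c * powR (ln (n%:R : R) / (n%:R : R)) (Delta%:R^-1) <= p ->
        1 - eps <= @gnp_prob R n p (@stars_event R Delta nu p n).
Proof.
move=> D0 nu0.
pose C0 : R := 4 * (Delta + 3)%N%:R / (7 * nu ^+ 2).
have C00 : 0 <= C0 by rewrite /C0 divr_ge0 ?mulr_ge0 ?ler0n ?exprn_ge0 ?ltW.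
exists (1 + C0) => eps e0.
exists (maxn 2 (Num.truncn eps^-1).+1) => n; rewrite geq_max => /andP[n2 nE] p p0 p1 hp.
have n0 : (0 < n)%N by apply: leq_trans n2.
have lnn : 0 < (n%:R : R) by rewrite ltr0n.
have ln0 : 0 <= ln (n%:R : R) by apply: ln_ge0; rewrite ler1n.
pose x : R := ln (n%:R : R) / n%:R.
have x0 : 0 <= x by rewrite /x divr_ge0 // ltW.
pose y := powR x Delta%:R^-1.
have yD : y ^+ Delta = x.
  rewrite /y -powR_mulrn ?powR_ge0 // -powRrM mulVf ?powRr1 //.
  by rewrite pnatr_eq0 -lt0n.
have hq : (1 + C0) ^+ Delta * x <= p ^+ Delta.
  have cy0 : 0 <= (1 + C0) * y by rewrite mulr_ge0 ?powR_ge0 // addr_ge0.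
  rewrite -yD -exprMn; apply: lerXn2r; [by rewrite nnegrE | by rewrite nnegrE (le_trans cy0 hp) | exact: hp].
have cD : C0 <= (1 + C0) ^+ Delta.
  have h1 : 1 <= 1 + C0 by lra.
  apply: le_trans (ler_eXnr D0 h1); lra.
have hm : 4 * ((Delta + 3) * n)%N%:R * ln (n%:R : R) <= 7 * p ^+ Delta * nu ^+ 2 * n%:R ^+ 2.
  have h : C0 * x <= p ^+ Delta by apply: le_trans hq; apply: ler_wpM2r.
  have k0 : 0 <= 7 * nu ^+ 2 * n%:R ^+ 2 by rewrite !mulr_ge0 ?exprn_ge0 ?ltW.
  have := ler_wpM2l k0 h.
  have -> : 7 * nu ^+ 2 * n%:R ^+ 2 * (C0 * x) = 4 * ((Delta + 3) * n)%N%:R * ln (n%:R : R).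
    rewrite /C0 /x natrM; field; rewrite ?(gt_eqF nu0) ?(gt_eqF lnn) //.
  move=> hh; apply: le_trans hh _; rewrite le_eqVlt; apply/orP; left; apply/eqP; ring.
rewrite (prob_compl R n p).
suff : gnp_prob p (predC (@stars_event R Delta nu p n)) <= eps by move=> h; lra.
apply: le_trans (@prob_bad R Delta nu n p p0 p1) _.
pose B : R := (n%:R ^+ ((Delta + 3) * n)%N)^-1.
have B0 : 0 <= B by rewrite /B invr_ge0 exprn_ge0 // ltW.
apply: (@le_trans _ _ (\sum_(a | Pv R Delta nu n a) B)).
  apply: ler_sum => a va; exact: (@term_bound R Delta nu n p p0 a n0 (ltW nu0) va hm).
rewrite (eq_bigl (fun a => a \in [set a | Pv R Delta nu n a])); last by move=> a; rewrite inE.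
rewrite sumr_const -mulr_natl.
have cnt : (#|[set a | Pv R Delta nu n a]| <= n ^ ((Delta + 2) * n))%N.
  apply: leq_trans (count_valid R Delta n nu) _.
  rewrite expnM; apply: leq_expn; apply: cnt_nat => //; exact: bin_leq_exp.
apply: (@le_trans _ _ ((n ^ ((Delta + 2) * n))%:R * B)).
  by apply: ler_wpM2r => //; rewrite ler_nat.
have -> : (n ^ ((Delta + 2) * n))%:R * B = ((n%:R : R) ^+ n)^-1.
  have e : ((Delta + 3) * n = (Delta + 2) * n + n)%N by lia.
  rewrite /B natrX e exprD invfM mulrA divff ?mul1r // expf_neq0 // gt_eqF //.
have hE : eps^-1 < n%:R.
  have ei : 0 <= eps^-1 by rewrite invr_ge0 ltW.
  case/andP: (Num.Theory.truncn_itv ei) => _ h.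
  apply: lt_le_trans h _; rewrite ler_nat; exact: nE.
apply: (@le_trans _ _ ((n%:R : R)^-1)).
  rewrite lef_pV2 ?posrE ?exprn_gt0 //.
  by rewrite -natrX ler_nat -[X in (X <= _)%N]expn1 leq_pexp2l.
by rewrite -[X in _ <= X]invrK lef_pV2 ?posrE ?invr_gt0 // ltW.
Qed.
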